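(* Let $p<q$ be coprime positive integers, $m$ a positive integer, $j\in\{3,4\}$ and $R=\mathbb C[X_0,X_1,X_j]$. Define $\mu:\mathbb Z^3\to\mathbb Z^3$, $\mu(d_0,d_1,d_j)=(d_0-pd_1+qd_j,\;d_1-d_j,\;pd_1-qd_j)$ (injective), $\Lambda=\mu(\mathbb Z_{\ge0}^3)$, and for $\lambda\in\Lambda$ let $f_\lambda=X_0^{d_0}X_1^{d_1}X_j^{d_j}$ where $\mu(d_0,d_1,d_j)=\lambda$. For $(n,c)$ with $(n,c,\omega)\in\Lambda$ for some $\omega$, let $\omega_{(n,c)}=\min\{\omega:(n,c,\omega)\in\Lambda\}$. For $(n,d)\in\mathbb Z\times\mathbb Z/m\mathbb Z$ let $\Lambda_{(n,d)}=\{(n,c,\omega)\in\Lambda: c\equiv d \pmod m\}$ and $c_{(n,d)}=\min\{c\in\mathbb Z: c\equiv d\pmod m,\ (n,c,\omega)\in\Lambda\text{ for some }\omega\}$. Let $\lambda=(n,c,\omega)$ and $\lambda'=(n,c',\omega')$ be elements of $\Lambda_{(n,d)}$. Then, with ideals taken in $R$: (i) if $c=c'$, then $f_\lambda-f_{\lambda'}\in(X_0^{q-p}-X_1X_j)$; (ii) if $c>c_{(n,d)}$, then $f_\lambda\in(X_0^{q-p}-X_1X_j,\;X_0^{mp}X_1^m)$; (iii) $f_\lambda-f_{\lambda'}\in(X_0^{q-p}-X_1X_j,\;1-X_0^{mp}X_1^m)$. If moreover $m=a(q-p)$ for a positive integer $a$, then: (iv) if $\omega=\omega'$, then $f_\lambda-f_{\lambda'}\in(1-X_1^{aq}X_j^{ap})$;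 (v) if $\omega=\omega_{(n,c)}$ and $\omega'=\omega_{(n,c')}$, then $\omega=\omega'$, and in particular $f_\lambda-f_{\lambda'}\in(1-X_1^{aq}X_j^{ap})$.
   Context: The minima $\omega_{(n,c)}$ and $c_{(n,d)}$ exist (the defining sets are nonempty and bounded below). The first coordinate of $\mu$ is the weight of the monomial under the $\mathbb C^*$-action with weights $1,-p,q$ on $X_0,X_1,X_j$, and $c\bmod m$ is its $\mu_m$-weight. *)

(* Defs.v *)
(* multinomials (mpoly) over the complex numbers R[i],
   R a realType (so R[i] is the field of complex numbers). *)
From HB Require Import structures.
From mathcomp Require Import all_boot all_order all_algebra.
From mathcomp Require Import reals.
From mathcomp Require Import complex.
From mathcomp Require Import mpoly.
Set Implicit Arguments. Unset Strict Implicit. Unset Printing Implicit Defensive.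
Import Order.TTheory GRing.Theory Num.Theory.
Local Open Scope ring_scope.

Definition mu (p q : nat) (d : nat * nat * nat) : int * int * int :=
  let: (d0, d1, dj) := d in
  ((d0%:Z - p%:Z * d1%:Z + q%:Z * dj%:Z)%R,
   (d1%:Z - dj%:Z)%R,
   (p%:Z * d1%:Z - q%:Z * dj%:Z)%R).

Definition inLambda (p q : nat) (l : int * int * int) : Prop :=
  exists d : nat * nat * nat, mu p q d = l.

Definition is_min (S : int -> Prop) (x : int) : Prop :=
  S x /\ forall y, S y -> (x <= y)%R.

Definition is_omega_min (p q : nat) (n c w : int) : Prop :=
  is_min (fun w' => inLambda p q (n, c, w')) w.

(* c_{(n,d)} = min { c | c = d mod m, exists w, (n,c,w) in Lambda },
   the class d in Z/mZ being represented by an integer dcl *)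
Definition is_c_min (p q m : nat) (n dcl c0 : int) : Prop :=
  is_min (fun c => (c == dcl %[mod m%:Z])%Z /\ exists w, inLambda p q (n, c, w)) c0.

(* R = C[X_0, X_1, X_j]; the three variables are indexed by 'I_3,
   index 2 standing for X_j (j in {3,4}). *)
Notation Cpoly R := {mpoly (R[i]) [3]}.
Definition i0 : 'I_3 := @Ordinal 3 0 isT.
Definition i1 : 'I_3 := @Ordinal 3 1 isT.
Definition ij : 'I_3 := @Ordinal 3 2 isT.

(* f_lambda = X_0^d0 X_1^d1 X_j^dj, where mu(d0,d1,dj) = lambda *)
Definition fmon (R : realType) (d : nat * nat * nat) : Cpoly R :=
  let: (d0, d1, dj) := d in 'X_i0 ^+ d0 * 'X_i1 ^+ d1 * 'X_ij ^+ dj.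

Definition in_ideal1 (R : realType) (g f : Cpoly R) : Prop :=
  exists h : Cpoly R, f = h * g.

Definition in_ideal2 (R : realType) (g1 g2 f : Cpoly R) : Prop :=
  exists h1 h2 : Cpoly R, f = h1 * g1 + h2 * g2.

(* Main.v *)
Require Import Defs.
From HB Require Import structures.
From mathcomp Require Import all_boot all_order all_algebra.
From mathcomp Require Import reals complex mpoly.
From mathcomp Require Import zify ring.
Import Order.TTheory GRing.Theory Num.Theory.
Local Open Scope ring_scope.

Section Help.
Variable R : realType.
Local Notation P := (Cpoly R).
Local Notation X0 := ('X_i0 : P).
Local Notation X1 := ('X_i1 : P).
Local Notation Xj := ('X_ij : P).

Lemma pow_fac (x y : P) k : exists S, x ^+ k - y ^+ k = (x - y) * S.
Proof. by exists (\sum_(i < k) x ^+ (k.-1 - i) * y ^+ i); rewrite subrXX. Qed.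

Lemma in1_sym (g a b : P) : in_ideal1 g (a - b) -> in_ideal1 g (b - a).
Proof. by move=> [h Hh]; exists (- h); rewrite -[LHS]opprB Hh mulNr. Qed.

Lemma in2_sym (g g' a b : P) : in_ideal2 g g' (a - b) -> in_ideal2 g g' (b - a).
Proof.
by move=> [h [h' Hh]]; exists (- h), (-h'); rewrite -[LHS]opprB Hh !mulNr opprD.
Qed.

Lemma core_i_le (p q : nat) (hpq : (p <= q)%N) d0 d1 dj e0 e1 ej :
  (e1 <= d1)%N ->
  (d0%:Z - p%:Z * d1%:Z + q%:Z * dj%:Z = e0%:Z - p%:Z * e1%:Z + q%:Z * ej%:Z)%R ->
  (d1%:Z - dj%:Z = e1%:Z - ej%:Z)%R ->
  in_ideal1 ('X_i0 ^+ (q - p) - 'X_i1 * 'X_ij : P)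
    (fmon R (d0, d1, dj) - fmon R (e0, e1, ej)).
Proof.
move=> hle h1 h2.
set k := (d1 - e1)%N.
have E1 : d1 = (e1 + k)%N by rewrite /k; lia.
have Ej : dj = (ej + k)%N by rewrite /k; lia.
have E0 : e0 = (d0 + (q - p) * k)%N by rewrite /k; nia.
rewrite E1 Ej E0.
have [S HS] := pow_fac (X1 * Xj) (X0 ^+ (q - p)) k.
exists (- (X0 ^+ d0 * X1 ^+ e1 * Xj ^+ ej * S)).
rewrite /fmon.
transitivity (X0 ^+ d0 * X1 ^+ e1 * Xj ^+ ej * ((X1 * Xj) ^+ k - (X0 ^+ (q - p)) ^+ k)).
  rewrite !exprD exprMn exprM; ring.
rewrite HS; ring.
Qed.

Lemma core_i (p q : nat) (hpq : (p <= q)%N) d0 d1 dj e0 e1 ej :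
  (d0%:Z - p%:Z * d1%:Z + q%:Z * dj%:Z = e0%:Z - p%:Z * e1%:Z + q%:Z * ej%:Z)%R ->
  (d1%:Z - dj%:Z = e1%:Z - ej%:Z)%R ->
  in_ideal1 ('X_i0 ^+ (q - p) - 'X_i1 * 'X_ij : P)
    (fmon R (d0, d1, dj) - fmon R (e0, e1, ej)).
Proof.
move=> h1 h2; case: (leqP e1 d1) => hle; first exact: core_i_le.
apply: in1_sym; apply: core_i_le => //; lia.
Qed.

Lemma shiftE (m p k d0 d1 dj : nat) :
  fmon R ((d0 + m * p * k)%N, (d1 + m * k)%N, dj) =
  fmon R (d0, d1, dj) * (X0 ^+ (m * p) * X1 ^+ m) ^+ k.
Proof. rewrite /fmon !exprD !exprM exprMn; ring. Qed.

Lemma shiftE2 (a p q r d0 d1 dj : nat) :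
  fmon R (d0, (d1 + a * q * r)%N, (dj + a * p * r)%N) =
  fmon R (d0, d1, dj) * (X1 ^+ (a * q) * Xj ^+ (a * p)) ^+ r.
Proof. rewrite /fmon !exprD !exprM exprMn; ring. Qed.


Lemma core_iv_le (a p q : nat) (hp : (0 < p)%N) (hpq : (p < q)%N) (hcop : coprime p q) (ha : (0 < a)%N)
  d0 d1 dj e0 e1 ej :
  (e1 <= d1)%N ->
  (d0%:Z - p%:Z * d1%:Z + q%:Z * dj%:Z = e0%:Z - p%:Z * e1%:Z + q%:Z * ej%:Z)%R ->
  (p%:Z * d1%:Z - q%:Z * dj%:Z = p%:Z * e1%:Z - q%:Z * ej%:Z)%R ->
  (exists z : int, (d1%:Z - dj%:Z) - (e1%:Z - ej%:Z) = z * (a * (q - p))%N%:Z) ->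
  in_ideal1 (1 - 'X_i1 ^+ (a * q) * 'X_ij ^+ (a * p) : P)
    (fmon R (d0, d1, dj) - fmon R (e0, e1, ej)).
Proof.
move=> hle h1 h2 [z hz].
have E0 : d0 = e0 by lia.
set s1 := (d1 - e1)%N.
have hej : (ej <= dj)%N by rewrite /s1; nia.
have hw : (p * s1 = q * (dj - ej))%N by rewrite /s1; nia.
have : (q %| s1)%N.
  rewrite -(@Gauss_dvdr q p); last by rewrite coprime_sym.
  by rewrite hw dvdn_mulr.
case/dvdnP => t Ht.
have Hj : (dj - ej = t * p)%N by nia.
have Ht2 : t%:Z * (q - p)%N%:Z = (z * a%:Z) * (q - p)%N%:Z.
  rewrite -mulrA -PoszM; rewrite -hz; lia.
have Ht3 := mulIf _ Ht2.
have {Ht3} Ht3 : t%:Z = z * a%:Z by apply: Ht3; rewrite eqz_nat; lia.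
case: z hz Ht2 Ht3 => [r|r] hz Ht2 Ht3; last by exfalso; nia.
have -> : d1 = (e1 + a * q * r)%N by nia.
have -> : dj = (ej + a * p * r)%N by nia.
rewrite E0 shiftE2.
set v := ('X_i1 ^+ (a * q) * 'X_ij ^+ (a * p) : P).
have [S HS] := pow_fac 1 v r.
exists (- fmon R (e0, e1, ej) * S).
transitivity (- fmon R (e0, e1, ej) * (1 ^+ r - v ^+ r)); first by rewrite expr1n; ring.
rewrite HS; ring.
Qed.


Lemma core_iv (a p q : nat) (hp : (0 < p)%N) (hpq : (p < q)%N) (hcop : coprime p q) (ha : (0 < a)%N)
  d0 d1 dj e0 e1 ej :
  (d0%:Z - p%:Z * d1%:Z + q%:Z * dj%:Z = e0%:Z - p%:Z * e1%:Z + q%:Z * ej%:Z)%R ->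
  (p%:Z * d1%:Z - q%:Z * dj%:Z = p%:Z * e1%:Z - q%:Z * ej%:Z)%R ->
  (exists z : int, (d1%:Z - dj%:Z) - (e1%:Z - ej%:Z) = z * (a * (q - p))%N%:Z) ->
  in_ideal1 (1 - 'X_i1 ^+ (a * q) * 'X_ij ^+ (a * p) : P)
    (fmon R (d0, d1, dj) - fmon R (e0, e1, ej)).
Proof.
move=> h1 h2 [z hz]; case: (leqP e1 d1) => hle.
  by apply: core_iv_le => //; exists z.
apply: in1_sym; apply: core_iv_le => //; try lia.
by exists (- z); rewrite mulNr -hz; lia.
Qed.

Lemma part3 (p q m k : nat) (hpq : (p <= q)%N) d0 d1 dj e0 e1 ej :
  (d0%:Z - p%:Z * d1%:Z + q%:Z * dj%:Z = e0%:Z - p%:Z * e1%:Z + q%:Z * ej%:Z)%R ->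
  (e1%:Z - ej%:Z = (d1%:Z - dj%:Z) + k%:Z * m%:Z)%R ->
  in_ideal2 ('X_i0 ^+ (q - p) - 'X_i1 * 'X_ij : P)
    (1 - 'X_i0 ^+ (m * p) * 'X_i1 ^+ m)
    (fmon R (d0, d1, dj) - fmon R (e0, e1, ej)).
Proof.
move=> h1 h2.
have [h Hh] := @core_i p q hpq (d0 + m * p * k) (d1 + m * k) dj e0 e1 ej
  ltac:(nia) ltac:(nia).
rewrite shiftE in Hh.
set u := (X0 ^+ (m * p) * X1 ^+ m) in Hh *.
have [S HS] := pow_fac 1 u k.
exists h, (fmon R (d0, d1, dj) * S).
transitivity ((fmon R (d0, d1, dj) * u ^+ k - fmon R (e0, e1, ej))
   + fmon R (d0, d1, dj) * (1 ^+ k - u ^+ k)); first by rewrite expr1n; ring.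
rewrite Hh HS; ring.
Qed.

Lemma part2 (p q m k : nat) (hpq : (p <= q)%N) d0 d1 dj e0 e1 ej :
  (d0%:Z - p%:Z * d1%:Z + q%:Z * dj%:Z = e0%:Z - p%:Z * e1%:Z + q%:Z * ej%:Z)%R ->
  (d1%:Z - dj%:Z = (e1%:Z - ej%:Z) + k.+1%:Z * m%:Z)%R ->
  in_ideal2 ('X_i0 ^+ (q - p) - 'X_i1 * 'X_ij : P)
    ('X_i0 ^+ (m * p) * 'X_i1 ^+ m)
    (fmon R (d0, d1, dj)).
Proof.
move=> h1 h2.
have [h Hh] := @core_i p q hpq d0 d1 dj (e0 + m * p * k.+1) (e1 + m * k.+1) ej
  ltac:(nia) ltac:(nia).
rewrite shiftE in Hh.
set u := (X0 ^+ (m * p) * X1 ^+ m) in Hh *.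
exists h, (fmon R (e0, e1, ej) * u ^+ k).
by rewrite -[LHS](subrK (fmon R (e0, e1, ej) * u ^+ k.+1)) Hh exprS; ring.
Qed.

End Help.

Lemma small_lem (Q X D E : int) : 0 <= D -> D < Q -> 0 <= E -> E < Q -> 0 < Q ->
  D - E = Q * X -> D = E.
Proof.
move=> h1 h2 h3 h4 h5 h6; case: (ltrgtP X 0) => hx.
- have : Q * X <= Q * (-1) by rewrite ler_pM2l //; lia.
  lia.
- have : Q * 1 <= Q * X by rewrite ler_pM2l //; lia.
  lia.
- move: h6; rewrite hx mulr0; lia.
Qed.

Lemma int_nat (z m c c' : int) : 0 < m -> c' - c = z * m -> c <= c' ->
  exists k : nat, c' - c = k%:Z * m.
Proof. case: z => k h1 h2 h3; first by exists k. exfalso; nia. Qed.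


Theorem lemma4p18 (R : realType) (p q m : nat)
  (hp : (0 < p)%N) (hpq : (p < q)%N) (hcop : coprime p q) (hm : (0 < m)%N)
  (dcl : int) (d d' : nat * nat * nat) (n c w c' w' : int)
  (hl : mu p q d = (n, c, w)) (hl' : mu p q d' = (n, c', w'))
  (hc : (c == dcl %[mod m%:Z])%Z) (hc' : (c' == dcl %[mod m%:Z])%Z) :
  let f := fmon R d in
  let f' := fmon R d' in
  let g := 'X_i0 ^+ (q - p) - 'X_i1 * 'X_ij : Cpoly R in
  [/\ (c = c' -> in_ideal1 g (f - f')),
      (forall c0, is_c_min p q m n dcl c0 -> c0 < c ->
         in_ideal2 g ('X_i0 ^+ (m * p) * 'X_i1 ^+ m) f),
      in_ideal2 g (1 - 'X_i0 ^+ (m * p) * 'X_i1 ^+ m) (f - f')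
    & forall a : nat, (0 < a)%N -> m = (a * (q - p))%N ->
      (w = w' -> in_ideal1 (1 - 'X_i1 ^+ (a * q) * 'X_ij ^+ (a * p)) (f - f'))
      /\ (is_omega_min p q n c w -> is_omega_min p q n c' w' ->
          w = w' /\ in_ideal1 (1 - 'X_i1 ^+ (a * q) * 'X_ij ^+ (a * p)) (f - f'))].
Proof.
move=> f f' g.
rewrite /f /f' /g {f f' g}.
case: d hl => [[d0 d1] dj] hl; case: d' hl' => [[e0 e1] ej] hl'.
case: hl => hn hcc hw; case: hl' => hn' hcc' hw'.
move: hc; rewrite eqz_mod_dvd => /dvdzP [k1 hk1].
move: hc'; rewrite eqz_mod_dvd => /dvdzP [k2 hk2].
have hpq' : (p <= q)%N by apply: ltnW.
have hm' : (0 < m%:Z)%R by rewrite ltz_nat.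
split.
- move=> ecc; apply: core_i => //; lia.
- move=> c0 [[hc0 [w0 [[[f0 f1] fj] he]]] hmin] hlt.
  case: he => hn0 hcc0 hw0.
  move: hc0; rewrite eqz_mod_dvd => /dvdzP [k0 hk0].
  have [k hk] := @int_nat (k1 - k0) m%:Z c0 c hm' ltac:(lia) ltac:(lia).
  case: k hk => [|k] hk; first by exfalso; lia.
  apply: (@part2 R p q m k hpq' d0 d1 dj f0 f1 fj); lia.
- case: (lerP c c') => hle.
    have [k hk] := @int_nat (k2 - k1) m%:Z c c' hm' ltac:(lia) hle.
    apply: (@part3 R p q m k hpq'); lia.
  have [k hk] := @int_nat (k1 - k2) m%:Z c' c hm' ltac:(lia) ltac:(lia).
  apply: in2_sym; apply: (@part3 R p q m k hpq'); lia.
- move=> a ha hma.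
  have hz : exists z : int, (d1%:Z - dj%:Z) - (e1%:Z - ej%:Z) = z * (a * (q - p))%N%:Z.
    by exists (k1 - k2); rewrite -hma; lia.
  have Hiv : w = w' -> in_ideal1 (1 - 'X_i1 ^+ (a * q) * 'X_ij ^+ (a * p) : Cpoly R)
      (fmon R (d0, d1, dj) - fmon R (e0, e1, ej)).
    by move=> eww; apply: core_iv => //; lia.
  split => // -[_ hmin] [_ hmin'].
  have hd0 : (d0 < q - p)%N.
    rewrite ltnNge; apply/negP => hge.
    have := hmin (w - (q - p)%N%:Z).
    have -> : (n, c, w - (q - p)%N%:Z) = mu p q ((d0 - (q - p))%N, d1.+1, dj.+1).
      rewrite /mu; congr (_, _, _); lia.
    move=> /(_ (ex_intro _ _ erefl)); lia.
  have he0 : (e0 < q - p)%N.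
    rewrite ltnNge; apply/negP => hge.
    have := hmin' (w' - (q - p)%N%:Z).
    have -> : (n, c', w' - (q - p)%N%:Z) = mu p q ((e0 - (q - p))%N, e1.+1, ej.+1).
      rewrite /mu; congr (_, _, _); lia.
    move=> /(_ (ex_intro _ _ erefl)); lia.
  case: hz => z hz.
  have hz' := congr1 (fun x => p%:Z * x) hz; simpl in hz'.
  have hX : (d0%:Z - e0%:Z = (q - p)%N%:Z * (p%:Z * z * a%:Z - dj%:Z + ej%:Z))%R.
    have EQ : (q - p)%N%:Z = (q%:Z - p%:Z)%R by lia.
    have Ea : (a * (q - p))%N%:Z = (a%:Z * (q%:Z - p%:Z))%R by rewrite PoszM EQ.
    rewrite Ea in hz'; rewrite EQ; lia.
  have E0 : d0 = e0.
    have := @small_lem (q - p)%N%:Z _ d0%:Z e0%:Z ltac:(lia) ltac:(lia) ltac:(lia) ltac:(lia) ltac:(lia) hX; lia.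
  have eww : w = w' by lia.
  by split => //; apply: Hiv.
Qed.
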